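(* (i) For every positive integer $k$, the sets $\{0,1,\dots,k-1\}$ and $k+\{0,k,2k,\dots,(k-1)k\}=\{k,2k,\dots,k^2\}$, viewed in $\mathbb{Z}_{k^2+1}$, form a (classical) $(k^2+1,2,k,1)$-SEDF in $\mathbb{Z}_{k^2+1}$. (ii) Let $v,k$ be positive integers with $k\mid v$, $v\mid k^2$ and $\lambda=k^2/v>1$, and in $\mathbb{Z}_{v+1}$ let $A_{X'}=\{0,1,\dots,k-1\}$ and $A_{Y'}=\{ak,ak+1,\dots,ak+\lambda-1: a=0,\dots,\tfrac{v}{k}-1\}$. Then there are no $s,t\in\mathbb{Z}_{v+1}$ and no $\mu$ such that $\{s+A_{X'}, t+A_{Y'}\}$ is a classical $(v+1,2,k,\mu)$-SEDF in $\mathbb{Z}_{v+1}$.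
   Context: For subsets $A,B$ of an additive group $G$, $\Delta(A,B)$ is the multiset $\{a-b:a\in A,b\in B\}$, and $s+A=\{s+a: a\in A\}$. For a group $G$ of order $v$ and $m>1$, a family of pairwise disjoint $k$-subsets $\{A_1,\dots,A_m\}$ of $G$ is a classical $(v,m,k,\lambda)$-SEDF if for each $i$ the multiset union $\bigcup_{j\neq i}\Delta(A_i,A_j)$ contains each non-identity element of $G$ exactly $\lambda$ times and does not contain $0$. (The sets $\{0,\dots,k-1\}$ and $\{0,k,\dots,(k-1)k\}$ form a non-disjoint $(k^2,2,k,1)$-SEDF in $\mathbb{Z}_{k^2}$; part (i) says a translation converts them into a classical SEDF in $\mathbb{Z}_{k^2+1}$, and part (ii) that no such conversion is possible when $\lambda>1$.) *)

(* Defs.v *)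
From mathcomp Require Import all_boot all_order all_algebra.
Set Implicit Arguments. Unset Strict Implicit. Unset Printing Implicit Defensive.
Import GRing.Theory.
Local Open Scope ring_scope.

Definition trans (G : finZmodType) (s : G) (A : {set G}) : {set G} :=
  [set s + a | a in A].

(* number of occurrences of g in the multiset Delta(A,B) = {a - b : a in A, b in B} *)
Definition delta_mult (G : finZmodType) (A B : {set G}) (g : G) : nat :=
  #|[set ab in setX A B | ab.1 - ab.2 == g]|.

Definition SEDF (G : finZmodType) (v m k lam : nat) (A : 'I_m -> {set G}) : Prop :=
  [/\ #|G| = v, (1 < m)%N,
      (forall i, #|A i| = k),
      (forall i j, i != j -> [disjoint A i & A j]) &
      (forall i (g : G),
          (\sum_(j < m | j != i) delta_mult (A i) (A j) g)%N
            = (if g == 0%R then 0%N else lam))].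

Arguments SEDF {G} v m k lam A.

Definition pair2 (G : finZmodType) (X Y : {set G}) : 'I_2 -> {set G} :=
  fun i => if val i == 0%N then X else Y.

(* Main.v *)
Require Import Defs.
From mathcomp Require Import all_boot all_order all_algebra.
From mathcomp Require Import zify ring.
Import GRing.Theory.
Local Open Scope ring_scope.

Lemma eqZ p : (1 < p)%N -> forall a b : nat,
  ((a%:R : 'Z_p) == b%:R) = (a %% p == b %% p)%N.
Proof. by move=> hp a b; rewrite -val_eqE /= !val_Zp_nat. Qed.

Lemma ZvalK p : (1 < p)%N -> forall x : 'Z_p, x = (val x)%:R.
Proof.
move=> hp x; apply: val_inj; rewrite /= val_Zp_nat // modn_small //.
by have := ltn_ord x; rewrite [X in (_ < X)%N -> _]Zp_cast.
Qed.

Arguments ZvalK {p}.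

Lemma cardZ p : (1 < p)%N -> #|'Z_p| = p.
Proof. by move=> hp; rewrite card_ord Zp_cast. Qed.

Lemma delta_swap (G : finZmodType) (A B : {set G}) g :
  delta_mult B A g = delta_mult A B (- g).
Proof.
rewrite /delta_mult.
have sw : cancel (fun ab : G * G => (ab.2, ab.1)) (fun ab => (ab.2, ab.1)).
  by case.
rewrite -(card_imset _ (can_inj sw)) (can2_imset_pre _ sw sw).
apply: eq_card => -[x y]; rewrite !inE /=.
rewrite [(y \in B) && _]andbC; congr (_ && _).
by rewrite -eqr_oppLR opprB.
Qed.

Lemma modp_char (p N i : nat) : (i < p)%N -> (N < p + p)%N -> (i < N)%N ->
  (N %% p == i %% p)%N = (N == i + p)%N.
Proof.
move=> hi hN hiN; rewrite (modn_small hi).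
case: (ltnP N p) => h.
  rewrite modn_small //; apply/eqP/eqP; lia.
have -> : N = ((N - p) + p)%N by lia.
rewrite modnDr modn_small; last by lia.
apply/eqP/eqP; lia.
Qed.

Lemma diffeq k (i j m : nat) : (0 < k)%N -> (i < k)%N -> (j < k)%N -> (m < k^2+1)%N ->
 ((i%:R : 'Z_(k^2+1)) - (k%:R + (j*k)%:R) == m%:R) = (m + k + j*k == i + (k^2+1))%N.
Proof.
move=> k0 ik jk mk.
have hp : (1 < k^2+1)%N by rewrite addn1 ltnS expn_gt0 k0.
rewrite subr_eq -!natrD eqZ // eq_sym.
have jk2 : (j * k + k <= k ^ 2)%N.
  by rewrite expnS expn1 -mulSnr leq_mul2r jk orbT.
rewrite addnA modp_char //; try lia.
Qed.

Lemma uniq_dm k q r i j : (r < k)%N -> (i < k)%N ->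
  (r + q * k = i + j * k)%N -> r = i /\ q = j.
Proof.
move=> rk ik e.
have k0 : (0 < k)%N by lia.
rewrite addnC [(i + _)%N]addnC in e.
have h1 := congr1 (fun x => x %% k)%N e.
have h2 := congr1 (fun x => x %/ k)%N e.
rewrite /= !modnMDl !modn_small // in h1.
rewrite /= !divnMDl // !divn_small // !addn0 in h2.
by [].
Qed.

Lemma delta1 k (k0 : (0 < k)%N) (g : 'Z_(k^2+1)) :
  delta_mult [set (i%:R : 'Z_(k ^ 2 + 1)) | i : 'I_k]
     (trans (k%:R) [set ((i * k)%N%:R : 'Z_(k ^ 2 + 1)) | i : 'I_k]) g
  = if g == 0 then 0%N else 1%N.
Proof.
have hp : (1 < k^2+1)%N by rewrite addn1 ltnS expn_gt0 k0.
have mp : (val g < k^2+1)%N.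
  by have := ltn_ord g; rewrite [X in (_ < X)%N -> _]Zp_cast.
have kk : (k ^ 2 = k * k)%N by rewrite expnS expn1.
rewrite /delta_mult (ZvalK hp g).
case: eqP => [g0|gn0].
  apply/eqP; rewrite cards_eq0; apply/eqP/setP => -[x y]; rewrite !inE /=.
  apply/negbTE/negP => /andP[/andP[hx hy] e]; rewrite /= in e.
  case/imsetP: hx e => i _ /= ->; case/imsetP: hy => y' /imsetP[j _ ->] /= ->.
  rewrite diffeq //.
  have := ltn_ord j; have := ltn_ord i.
  have -> : val g = 0%N by move: g0; rewrite -(ZvalK hp) => ->.
  move=> ik jk /eqP; nia.
have m0 : (0 < val g)%N.
  rewrite lt0n; apply/eqP => h; apply: gn0; rewrite -(ZvalK hp); apply: val_inj.
  by rewrite h.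
set m := val g in mp m0 *.
have qk : ((m.-1) %/ k < k)%N by rewrite ltn_divLR //; lia.
have rk : ((m.-1) %% k < k)%N by rewrite ltn_pmod.
have dq := divn_eq m.-1 k.
set q := ((m.-1) %/ k)%N in qk dq.
set r := ((m.-1) %% k)%N in rk dq.
have j0k : (k - 1 - q < k)%N by lia.
rewrite (_ : [set _ in _ | _] = [set ((Ordinal rk)%:R, k%:R + ((Ordinal j0k) * k)%N%:R)]).
  by rewrite cards1.
apply/setP => -[x y]; rewrite !inE /=.
apply/idP/idP.
  move=> /andP[/andP[hx hy] e]; rewrite /= in e.
  case/imsetP: hx e => i _ /= ->; case/imsetP: hy => y' /imsetP[j _ ->] /= ->.
  rewrite diffeq // => /eqP e.
  have := ltn_ord j; have := ltn_ord i => ik jk.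
  have [<- eq2] : r = i /\ (q + 1 + j = k)%N.
    have [] := @uniq_dm k (q + 1 + j) r i k rk ik; first by nia.
    by [].
  rewrite xpair_eqE !eqxx /=.
  by have -> : (k - 1 - q = j)%N by lia.
move=> /andP[/eqP /= -> /eqP /= ->].
apply/andP; split; first (apply/andP; split).
- by apply/imsetP; exists (Ordinal rk).
- by apply/imsetP; exists ((Ordinal j0k) * k)%N%:R => //; apply/imsetP; exists (Ordinal j0k).
rewrite /= diffeq //; apply/eqP; nia.
Qed.
Lemma cover v k : (0 < v)%N -> (0 < k)%N -> (k %| v)%N -> (v %| k^2)%N ->
  (1 < k^2 %/ v)%N -> forall r, (r < v+1)%N ->
  exists i a c, [/\ (i < k)%N, (a < v %/ k)%N, (c < k^2 %/ v)%N &
     (i %% (v+1) = (r + (a*k + c)) %% (v+1))%N].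
Proof.
move=> v0 k0 kv vk l1 r rv.
have ev : v = (v %/ k * k)%N by rewrite divnK.
have ek : (k ^ 2 = k ^ 2 %/ v * v)%N by rewrite divnK.
set n := (v %/ k)%N in ev *.
set l := (k ^ 2 %/ v)%N in ek l1 *.
have kk : (k ^ 2 = k * k)%N by rewrite expnS expn1.
have kln : (k = l * n)%N.
  apply/eqP; rewrite -(eqn_pmul2r k0); apply/eqP; rewrite -kk ek {1}ev; lia.
have n0 : (0 < n)%N by rewrite lt0n; apply/eqP => h; move: kln; rewrite h muln0; lia.
have k2 : (2 <= k)%N.
  rewrite kln; apply: (leq_trans l1); rewrite leq_pmulr //.
case: (ltnP r k) => rk.
  by exists r, 0%N, 0%N; split; [lia|lia|lia|rewrite mul0n !addn0].
set w := (v + 1 - r)%N.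
have dw := divn_eq w k.
have bk : (w %% k < k)%N by rewrite ltn_pmod.
set q := (w %/ k)%N in dw.
set b := (w %% k)%N in dw bk.
have wle : (w <= v + 1 - k)%N by lia.
have qn : (q < n)%N.
  by rewrite ltn_divLR //; lia.
case: (posnP b) => b0.
  exists 0%N, q, 0%N; split; [lia|lia|lia|].
  have -> : (r + (q * k + 0) = 0 + (v+1))%N by lia.
  by rewrite modnDr.
case: (ltnP q.+1 n) => qn1.
  exists (k - b)%N, q.+1, 0%N; split; [lia|lia|lia|].
  have -> : (r + (q.+1 * k + 0) = (k - b) + (v+1))%N by rewrite mulSn; lia.
  by rewrite modnDr.
have qe : n = q.+1 by lia.
have b1 : b = 1%N.
  move: wle; rewrite ev qe mulSn; lia.
exists 0%N, q, 1%N; split; [lia|lia|lia|].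
have -> : (r + (q * k + 1) = 0 + (v+1))%N by lia.
by rewrite modnDr.
Qed.

Lemma sum2 (F : 'I_2 -> nat) (i : 'I_2) :
  (\sum_(j < 2 | j != i) F j)%N = F (if val i == 0%N then ord_max else ord0).
Proof.
rewrite big_mkcond /= !big_ord_recl big_ord0 /=.
case: i => [[|[|//]] hi] /=.
- by rewrite add0n addn0; congr F; exact: val_inj.
- by rewrite !addn0.
Qed.

Theorem theorem4p2 :
  (forall k : nat, (0 < k)%N ->
     SEDF (k ^ 2 + 1) 2 k 1
       (pair2 [set (i%:R : 'Z_(k ^ 2 + 1)) | i : 'I_k]
              (trans (k%:R) [set ((i * k)%N%:R : 'Z_(k ^ 2 + 1)) | i : 'I_k])))
  /\
  (forall v k : nat, (0 < v)%N -> (0 < k)%N -> (k %| v)%N -> (v %| k ^ 2)%N ->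
     (1 < k ^ 2 %/ v)%N ->
     forall (s t : 'Z_(v + 1)) (mu : nat),
       ~ SEDF (v + 1) 2 k mu
           (pair2 (trans s [set (i%:R : 'Z_(v + 1)) | i : 'I_k])
                  (trans t [set ((a * k + c)%N%:R : 'Z_(v + 1))
                           | a : 'I_(v %/ k), c : 'I_(k ^ 2 %/ v)]))).
Proof.
split.
  move=> k k0.
  have hp : (1 < k^2+1)%N by rewrite addn1 ltnS expn_gt0 k0.
  have kk : (k ^ 2 = k * k)%N by rewrite expnS expn1.
  have cX : #|[set (i%:R : 'Z_(k ^ 2 + 1)) | i : 'I_k]| = k.
    rewrite card_imset ?card_ord // => i j /eqP; rewrite eqZ // !modn_small //.
    + by move/eqP/val_inj.
    + have := ltn_ord j; nia.
    + have := ltn_ord i; nia.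
  have cY : #|trans (k%:R) [set ((i * k)%N%:R : 'Z_(k ^ 2 + 1)) | i : 'I_k]| = k.
    rewrite /trans card_imset; last exact: addrI.
    rewrite card_imset ?card_ord // => i j /eqP; rewrite eqZ // !modn_small //.
    + move/eqP => e; apply: val_inj; apply/eqP; rewrite -(eqn_pmul2r k0); exact/eqP.
    + have := ltn_ord j; nia.
    + have := ltn_ord i; nia.
  have dXY : [disjoint [set (i%:R : 'Z_(k ^ 2 + 1)) | i : 'I_k] &
              trans (k%:R) [set ((i * k)%N%:R : 'Z_(k ^ 2 + 1)) | i : 'I_k]].
    rewrite -setI_eq0; apply/eqP/setP => x; rewrite !inE; apply/negbTE/negP.
    move=> /andP[/imsetP[i _ ->] /imsetP[y /imsetP[j _ ->] /eqP]].
    rewrite -natrD eqZ // !modn_small //.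
    + move/eqP; have := ltn_ord i; lia.
    + have := ltn_ord j; nia.
    + have := ltn_ord i; nia.
  split.
  - exact: cardZ.
  - by [].
  - by case=> [[|[|//]] hi].
  - case=> [[|[|//]] hi]; case=> [[|[|//]] hj] //=.
    by rewrite disjoint_sym.
  - move=> i g; rewrite sum2.
    case: i => [[|[|//]] hi] /=.
    + by rewrite delta1.
    + by rewrite delta_swap delta1 // oppr_eq0.
move=> v k v0 k0 kv vk l1 s t mu [_ _ _ _ hd].
have := hd ord0 0; rewrite sum2 eqxx /=.
have hp : (1 < v + 1)%N by lia.
have rts : (val (t - s)%R < v + 1)%N.
  by have := ltn_ord (t - s); rewrite [X in (_ < X)%N -> _]Zp_cast.
have [i [a [c [ik an cl e]]]] := cover v k v0 k0 kv vk l1 (val (t - s)) rts.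

have ei : (i%:R : 'Z_(v+1)) = (t - s) + (a * k + c)%N%:R.
  rewrite {1}(ZvalK hp (t - s)) -natrD; apply/eqP; rewrite eqZ //.
  by rewrite e.
move/eqP; rewrite cards_eq0 => /eqP /setP /(_ (s + i%:R, t + (a * k + c)%N%:R)).
rewrite !inE /= ei.
have -> : s + (t - s + (a * k + c)%N%:R) - (t + (a * k + c)%N%:R) = 0.
  by ring.
rewrite eqxx !andbT => /negbT/negP; apply; apply/andP; split.
  apply/imsetP; exists ((t - s + (a * k + c)%N%:R)) => //.
  by rewrite -ei; apply/imsetP; exists (Ordinal ik).
apply/imsetP; exists ((a * k + c)%N%:R) => //.
by apply/imset2P; exists (Ordinal an) (Ordinal cl).
Qed.
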